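(* Let $\{\Phi^{(n)}\}_{n\ge1}$ be a sequence of finite crystallographic root systems and, for each $n$, let $\Psi^{(n)}$ be an antichain in the root poset of $\Phi^{(n)}$. Then the variance of $\mathcal{X}_{\Psi^{(n)}}$ grows linearly with $|\Psi^{(n)}|$: there are constants $c,C>0$ and $N$ such that $c\,|\Psi^{(n)}|\le\operatorname{Var}(\mathcal{X}_{\Psi^{(n)}})\le C\,|\Psi^{(n)}|$ for all $n\ge N$.
   Context: A finite crystallographic root system $\Phi$ has simple roots $\Delta$, positive roots $\Phi^+$ and Weyl group $W$. The root poset is the partial order on $\Phi^+$ generated by $\beta\prec\gamma$ whenever $\gamma-\beta\in\Delta$; an antichain is a set of pairwise incomparable positive roots. For $\beta\in\Phi^+$, $\mathcal{X}_\beta$ is the Bernoulli random variable on $W$ (uniform) with $\mathcal{X}_\beta(w)=1$ if $w(\beta)\in-\Phi^+$ and $0$ otherwise; $\mathcal{X}_\Psi=\sum_{\beta\in\Psi}\mathcal{X}_\beta$. *)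

(* Defs.v *)
From HB Require Import structures.
From mathcomp Require Import all_boot all_order all_algebra all_fingroup.
From mathcomp Require Import boolp reals.
Set Implicit Arguments. Unset Strict Implicit. Unset Printing Implicit Defensive.
Import Order.TTheory GRing.Theory Num.Theory.
Local Open Scope ring_scope.

Section RootSystems.
Variable R : realType.
Variables (d m : nat).

Definition dotp (u v : 'rV[R]_d) : R := \sum_(i < d) u 0 i * v 0 i.

Definition refl (a b : 'rV[R]_d) : 'rV[R]_d :=
  b - (2 * dotp b a / dotp a a) *: a.

Definition is_root_system (Phi : 'I_m -> 'rV[R]_d) : Prop :=
  [/\ injective Phi,
      (forall i, Phi i != 0),
      (forall i j, exists k, Phi k = refl (Phi i) (Phi j)),
      (forall i j, 2 * dotp (Phi j) (Phi i) / dotp (Phi i) (Phi i) \is a Num.int)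
    & (forall i j (a : R), Phi j = a *: Phi i -> Phi j = Phi i \/ Phi j = - Phi i)].

Definition is_simple_system (Phi : 'I_m -> 'rV[R]_d) (Delta : {set 'I_m}) : Prop :=
  (forall c : 'I_m -> R, \sum_(s in Delta) c s *: Phi s = 0 ->
     forall s, s \in Delta -> c s = 0) /\
  (forall j, exists c : 'I_m -> int,
     Phi j = \sum_(s in Delta) (c s)%:~R *: Phi s /\
     ((forall s, (0 <= c s)%R) \/ (forall s, (c s <= 0)%R))).

Definition positive_root (Phi : 'I_m -> 'rV[R]_d) (Delta : {set 'I_m}) (j : 'I_m) : Prop :=
  exists c : 'I_m -> int, (forall s, (0 <= c s)%R) /\
     Phi j = \sum_(s in Delta) (c s)%:~R *: Phi s.

Definition in_neg_positive (Phi : 'I_m -> 'rV[R]_d) (Delta : {set 'I_m}) (k : 'I_m) : Prop :=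
  exists k', positive_root Phi Delta k' /\ Phi k = - Phi k'.

Definition root_cover (Phi : 'I_m -> 'rV[R]_d) (Delta : {set 'I_m}) (j k : 'I_m) : Prop :=
  positive_root Phi Delta j /\ positive_root Phi Delta k /\
  exists s, s \in Delta /\ Phi k - Phi j = Phi s.

Inductive root_le (Phi : 'I_m -> 'rV[R]_d) (Delta : {set 'I_m}) : 'I_m -> 'I_m -> Prop :=
  | root_le_refl j : root_le Phi Delta j j
  | root_le_step j k l : root_le Phi Delta j k -> root_cover Phi Delta k l ->
                         root_le Phi Delta j l.

Definition antichain (Phi : 'I_m -> 'rV[R]_d) (Delta : {set 'I_m}) (Psi : {set 'I_m}) : Prop :=
  (forall j, j \in Psi -> positive_root Phi Delta j) /\
  (forall j k, j \in Psi -> k \in Psi -> j != k -> ~ root_le Phi Delta j k).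

(* The Weyl group, realised (faithfully) through its action on the roots: the
   subgroup of permutations of the root indices generated by the permutations
   induced by the reflections s_alpha, alpha in Phi. *)
Definition refl_perms (Phi : 'I_m -> 'rV[R]_d) : {set {perm 'I_m}} :=
  [set p : {perm 'I_m} | `[< exists i, forall j, Phi (p j) = refl (Phi i) (Phi j) >]].

Definition weyl (Phi : 'I_m -> 'rV[R]_d) : {group {perm 'I_m}} :=
  <<refl_perms Phi>>%G.

Definition X_Psi (Phi : 'I_m -> 'rV[R]_d) (Delta Psi : {set 'I_m}) (w : {perm 'I_m}) : R :=
  (#|[set j in Psi | `[< in_neg_positive Phi Delta (w j) >]]|)%:R.

Definition expect (Phi : 'I_m -> 'rV[R]_d) (f : {perm 'I_m} -> R) : R :=
  (\sum_(w in weyl Phi) f w) / (#|weyl Phi|)%:R.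

Definition var_X (Phi : 'I_m -> 'rV[R]_d) (Delta Psi : {set 'I_m}) : R :=
  expect Phi (fun w => (X_Psi Phi Delta Psi w) ^+ 2)
  - (expect Phi (X_Psi Phi Delta Psi)) ^+ 2.

End RootSystems.

(* Main.v *)
Require Import Defs.
From HB Require Import structures.
From mathcomp Require Import all_boot all_order all_algebra all_fingroup.
From mathcomp Require Import boolp reals.
From mathcomp Require Import ring lra zify.
Import Order.TTheory GRing.Theory Num.Theory.
Set Implicit Arguments. Unset Strict Implicit. Unset Printing Implicit Defensive.
Local Open Scope ring_scope.

Section Dot.
Variables (R : realType) (d : nat).
Implicit Types u v w a b : 'rV[R]_d.

Lemma dotpC u v : dotp u v = dotp v u.
Proof. by apply: eq_bigr => i _; rewrite mulrC. Qed.

Lemma dotpDZl x u v w : dotp (x *: u + v) w = x * dotp u w + dotp v w.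
Proof.
rewrite /dotp mulr_sumr -big_split /=; apply: eq_bigr => i _.
by rewrite !mxE mulrDl mulrA.
Qed.

Lemma dotpDZr x u v w : dotp w (x *: u + v) = x * dotp w u + dotp w v.
Proof. by rewrite dotpC dotpDZl ![dotp _ w]dotpC. Qed.

Lemma dotpZl x u w : dotp (x *: u) w = x * dotp u w.
Proof. by rewrite /dotp mulr_sumr; apply: eq_bigr => i _; rewrite mxE mulrA. Qed.

Lemma dotpZr x u w : dotp w (x *: u) = x * dotp w u.
Proof. by rewrite dotpC dotpZl dotpC. Qed.

Lemma dotpDl u v w : dotp (u + v) w = dotp u w + dotp v w.
Proof. by have := dotpDZl 1 u v w; rewrite scale1r mul1r. Qed.

Lemma dotpDr u v w : dotp w (u + v) = dotp w u + dotp w v.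
Proof. by rewrite dotpC dotpDl ![dotp _ w]dotpC. Qed.

Lemma dotpNl u w : dotp (- u) w = - dotp u w.
Proof. by rewrite -scaleN1r dotpZl mulN1r. Qed.

Lemma dotpNr u w : dotp w (- u) = - dotp w u.
Proof. by rewrite dotpC dotpNl dotpC. Qed.

Lemma dotpBl u v w : dotp (u - v) w = dotp u w - dotp v w.
Proof. by rewrite dotpDl dotpNl. Qed.

Lemma dotpBr u v w : dotp w (u - v) = dotp w u - dotp w v.
Proof. by rewrite dotpDr dotpNr. Qed.

Lemma dotp_suml (I : finType) (P : pred I) (F : I -> 'rV[R]_d) w :
  dotp (\sum_(i | P i) F i) w = \sum_(i | P i) dotp (F i) w.
Proof.
apply: (big_ind2 (fun x y => dotp x w = y)) => //.
  by rewrite /dotp big1 // => i _; rewrite mxE mul0r.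
by move=> x1 x2 y1 y2 <- <-; rewrite dotpDl.
Qed.

Lemma dotp_sumr (I : finType) (P : pred I) (F : I -> 'rV[R]_d) w :
  dotp w (\sum_(i | P i) F i) = \sum_(i | P i) dotp w (F i).
Proof. by rewrite dotpC dotp_suml; apply: eq_bigr => i _; rewrite dotpC. Qed.

Lemma dotpp_ge0 u : 0 <= dotp u u.
Proof. by apply: sumr_ge0 => i _; rewrite -expr2 sqr_ge0. Qed.

Lemma dotpp_eq0 u : (dotp u u == 0) = (u == 0).
Proof.
apply/idP/eqP => [|->]; last by rewrite /dotp big1 // => i _; rewrite mxE mul0r.
rewrite /dotp psumr_eq0 => [/allP H|i _]; last by rewrite -expr2 sqr_ge0.
apply/rowP => i; rewrite mxE.
by have /implyP := H i (mem_index_enum i); rewrite -expr2 sqrf_eq0 => /(_ isT)/eqP.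
Qed.

Lemma dotpp_gt0 u : u != 0 -> 0 < dotp u u.
Proof. by move=> h; rewrite lt_def dotpp_eq0 h dotpp_ge0. Qed.

Lemma refl_lin a x y u v :
  refl a (x *: u + y *: v) = x *: refl a u + y *: refl a v.
Proof.
rewrite /refl dotpDZl dotpZl.
rewrite !scalerBr !scalerA.
set k := dotp a a.
rewrite mulrDr mulrDl scalerDl.
have -> : x * (2 * dotp u a / k) = 2 * (x * dotp u a) / k by ring.
have -> : y * (2 * dotp v a / k) = 2 * (y * dotp v a) / k by ring.
by rewrite opprD addrACA.
Qed.

Lemma refl_self a : a != 0 -> refl a a = - a.
Proof.
move=> h; rewrite /refl mulfK ?dotpp_eq0 //.
by rewrite scaler_nat mulr2n opprD addrA subrr add0r.
Qed.

End Dot.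

Definition lf (R : realDomainType) (a b : R) (p : int * int) := p.1%:~R * a + p.2%:~R * b.
Definition bothneg (R : realDomainType) (a b : R) (q : (int*int)*(int*int)) :=
  (lf a b q.1 < 0) && (lf a b q.2 < 0).
Definition nzall (R : realDomainType) (a b : R) (L : seq ((int*int)*(int*int))) :=
  all (fun q => (lf a b q.1 != 0) && (lf a b q.2 != 0)) L.

Fixpoint wact (z1 z2 : int) (l : seq bool) (p : int * int) : int * int :=
  match l with
  | [::] => p
  | t :: l' => wact z1 z2 l' (if t then (- p.1 - z2 * p.2, p.2)%R else (p.1, - p.2 - z1 * p.1)%R)
  end.

Definition alt (t : bool) (n : nat) : seq bool := mkseq (fun i => if odd i then ~~ t else t) n.
Definition words (h : nat) : seq (seq bool) :=
  [::] :: map (alt true) (iota 1 h) ++ map (alt false) (iota 1 h.-1).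
Definition pairsof z1 z2 h :=
  map (fun l => (wact z1 z2 l (1, 0)%R, wact z1 z2 l (0, 1)%R)) (words h).

Lemma PoszR (R : pzRingType) n : (Posz n)%:~R = n%:R :> R. Proof. by []. Qed.
Lemma NegzR (R : pzRingType) n : (Negz n)%:~R = - (n.+1)%:R :> R.
Proof. by rewrite NegzE mulrNz. Qed.

Ltac splitatoms :=
  repeat match goal with
  | |- context [?f < 0] => case: (ltgtP f 0) => ?
  | |- context [0 < ?f] => case: (ltgtP f 0) => ?
  end.

Ltac numcase :=
  move=> a b;
  match goal with |- context [pairsof ?z1 ?z2 ?h] =>
    let L := eval vm_compute in (pairsof z1 z2 h) in change (pairsof z1 z2 h) with L end;
  rewrite /nzall /bothneg /lf /= ?(PoszR, NegzR)
    ?(mulr0n, mulr1n, mul0r, mul1r, mulNr, addr0, add0r, oppr0);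
  rewrite -?opprD ?oppr_lt0 ?oppr_eq0;
  splitatoms; try by []; exfalso; lra.

Lemma case00 (R : realType) (a b : R) : nzall a b (pairsof 0 0 2) -> count (bothneg a b) (pairsof 0 0 2) = 1%N.
Proof. move: a b; numcase. Qed.
Lemma case11 (R : realType) (a b : R) : nzall a b (pairsof (-1) (-1) 3) -> count (bothneg a b) (pairsof (-1) (-1) 3) = 1%N.
Proof. move: a b; numcase. Qed.
Lemma case12 (R : realType) (a b : R) : nzall a b (pairsof (-1) (-2) 4) -> count (bothneg a b) (pairsof (-1) (-2) 4) = 1%N.
Proof. move: a b; numcase. Qed.
Lemma case21 (R : realType) (a b : R) : nzall a b (pairsof (-2) (-1) 4) -> count (bothneg a b) (pairsof (-2) (-1) 4) = 1%N.
Proof. move: a b; numcase. Qed.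
Lemma case13 (R : realType) (a b : R) : nzall a b (pairsof (-1) (-3) 6) -> count (bothneg a b) (pairsof (-1) (-3) 6) = 1%N.
Proof. move: a b; numcase. Qed.
Lemma case31 (R : realType) (a b : R) : nzall a b (pairsof (-3) (-1) 6) -> count (bothneg a b) (pairsof (-3) (-1) 6) = 1%N.
Proof. move: a b; numcase. Qed.

Lemma count_lemma (gT : finGroupType) (W : {group gT}) (A : pred gT) (vs : seq gT) :
  all (mem W) vs -> (forall w, w \in W -> count (fun v => A (v * w)%g) vs = 1%N) ->
  (#|[set w in W | A w]| * size vs = #|W|)%N.
Proof.
move=> vW h.
have e1 : (\sum_(w in W) count (fun v => A (v * w)%g) vs = #|W|)%N.
  by rewrite -sum1_card; apply: eq_bigr => w /h.
rewrite -e1 mulnC; elim: vs vW {h e1} => [|v vs IH] /=.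
  by rewrite big1.
move=> /andP[vW /IH]; rewrite big_split /= => <-; congr (_ + _)%N.
have -> : (\sum_(i in W) A (v * i)%g = #|[set w in W | A (v * w)%g]|)%N.
  rewrite -sum1_card big_mkcond [RHS]big_mkcond /=; apply: eq_bigr => w _.
  by rewrite inE; case: (w \in W) => //=; case: ifP.
rewrite -(card_imset [set w in W | A w] (mulgI (v^-1)%g)); apply: eq_card => u.
apply/idP/idP.
  case/imsetP => w H ->; have /andP[wW Aw] : (w \in W) && A w by move: H; rewrite inE.
  by rewrite inE groupM ?groupV //= mulKVg.
move=> H; have /andP[uW Au] : (u \in W) && A (v * u)%g by move: H; rewrite inE.
apply/imsetP; exists (v * u)%g; last by rewrite mulKg.
by rewrite inE groupM.
Qed.

Section Roots.
Variables (R : realType) (d m : nat) (Phi : 'I_m -> 'rV[R]_d) (Delta : {set 'I_m}).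
Hypothesis hPhi : is_root_system Phi.
Hypothesis hDelta : is_simple_system Phi Delta.

Lemma Phi_inj : injective Phi. Proof. by case: hPhi. Qed.
Lemma Phi_neq0 i : Phi i != 0. Proof. by case: hPhi. Qed.
Lemma Phi_refl i j : exists k, Phi k = refl (Phi i) (Phi j). Proof. by case: hPhi. Qed.
Lemma Phi_int i j : 2 * dotp (Phi j) (Phi i) / dotp (Phi i) (Phi i) \is a Num.int.
Proof. by case: hPhi. Qed.
Lemma Phi_red i j a : Phi j = a *: Phi i -> Phi j = Phi i \/ Phi j = - Phi i.
Proof. by case: hPhi => _ _ _ _; apply. Qed.

Lemma Phi_opp i : exists k, Phi k = - Phi i.
Proof. by have [k hk] := Phi_refl i i; exists k; rewrite hk refl_self // Phi_neq0. Qed.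

Lemma dot_pos i : 0 < dotp (Phi i) (Phi i).
Proof. exact/dotpp_gt0/Phi_neq0. Qed.

Lemma CS_strict i j : Phi j != Phi i -> Phi j != - Phi i ->
  dotp (Phi i) (Phi j) ^+ 2 < dotp (Phi i) (Phi i) * dotp (Phi j) (Phi j).
Proof.
move=> h1 h2.
set a := Phi i; set b := Phi j.
have aa0 := dot_pos i; rewrite -/a in aa0.
set t := dotp a b / dotp a a.
have vn0 : b - t *: a != 0.
  apply/negP => /eqP hv; have hb : b = t *: a by apply/eqP; rewrite -subr_eq0 hv.
  by case: (Phi_red hb) => /eqP; rewrite ?(negbTE h1) ?(negbTE h2).
have := dotpp_gt0 vn0.
rewrite dotpBl !dotpBr !dotpZl !dotpZr [dotp b a]dotpC.
have -> : dotp b b - t * dotp a b - (t * dotp a b - t * (t * dotp a a)) =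
          dotp b b - dotp a b ^+ 2 / dotp a a.
  rewrite /t; field; exact: lt0r_neq0.
rewrite subr_gt0 ltr_pdivrMr // mulrC //.
Qed.

Lemma string i j : 0 < dotp (Phi i) (Phi j) -> Phi i != Phi j ->
  exists k, Phi k = Phi i - Phi j.
Proof.
move=> hp hne.
have hnn : Phi j != - Phi i.
  apply/negP => /eqP e; move: hp; rewrite e dotpNr oppr_gt0 ltNge.
  by rewrite le_eqVlt dot_pos orbT.
have hji : Phi j != Phi i by rewrite eq_sym.
have hcs := CS_strict hji hnn.
have /intrP [z1 hz1] := Phi_int j i.
have /intrP [z2 hz2] := Phi_int i j.
move: hz1 hz2; rewrite [dotp (Phi j) (Phi i)]dotpC.
set ab := dotp (Phi i) (Phi j); set aa := dotp (Phi i) (Phi i); set bb := dotp (Phi j) (Phi j).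
move=> hz1 hz2.
have aa0 : 0 < aa by exact: dot_pos.
have bb0 : 0 < bb by exact: dot_pos.
have z1p : (0 < z1)%R by rewrite -(ltr0z R) -hz1; apply: divr_gt0 => //; rewrite mulr_gt0.
have z2p : (0 < z2)%R by rewrite -(ltr0z R) -hz2; apply: divr_gt0 => //; rewrite mulr_gt0.
have z12 : (z1 * z2 < 4)%R.
  rewrite -(ltr_int R) intrM -hz1 -hz2.
  have -> : 2 * ab / bb * (2 * ab / aa) = 4 * (ab ^+ 2 / (aa * bb)).
    by field; rewrite ?lt0r_neq0.
  rewrite -[X in _ < X]mulr1 ltr_pM2l // ltr_pdivrMr ?mul1r //; exact: mulr_gt0.
have [e1|e2] : z1 = 1 \/ z2 = 1 by lia.
  have [k hk] := Phi_refl j i; exists k; rewrite hk /refl -/ab -/bb.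
  by rewrite hz1 e1 scale1r.
have [k hk] := Phi_refl i j; have [k' hk'] := Phi_opp k; exists k'.
by rewrite hk' hk /refl [dotp (Phi j) (Phi i)]dotpC -/ab -/aa hz2 e2 scale1r opprB.
Qed.

Definition cf (j : 'I_m) : 'I_m -> int := projT1 (cid (hDelta.2 j)).
Lemma cfE j : Phi j = \sum_(s in Delta) (cf j s)%:~R *: Phi s.
Proof. by rewrite /cf; case: (cid _) => c [] /=. Qed.
Lemma cf_sign j : (forall s, (0 <= cf j s)%R) \/ (forall s, (cf j s <= 0)%R).
Proof. by rewrite /cf; case: (cid _) => c [] /=. Qed.

Definition ht (j : 'I_m) : R := \sum_(s in Delta) (cf j s)%:~R.

Lemma coef_uniq (e e' : 'I_m -> R) :
  \sum_(s in Delta) e s *: Phi s = \sum_(s in Delta) e' s *: Phi s ->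
  forall s, s \in Delta -> e s = e' s.
Proof.
move=> h s hs; apply/eqP; rewrite -subr_eq0; apply/eqP.
move: s hs; apply: hDelta.1.
rewrite (eq_bigr (fun s => e s *: Phi s - e' s *: Phi s)); last by move=> s _; rewrite scalerBl.
by rewrite sumrB h subrr.
Qed.

Lemma ht_comb k (e : 'I_m -> R) : Phi k = \sum_(s in Delta) e s *: Phi s ->
  ht k = \sum_(s in Delta) e s.
Proof.
move=> h; rewrite /ht; apply: eq_bigr => s hs; apply: (@coef_uniq (fun s => (cf k s)%:~R) e _ s hs).
by rewrite -h -cfE.
Qed.

Lemma ht_lin2 k i j x y : Phi k = x *: Phi i + y *: Phi j -> ht k = x * ht i + y * ht j.
Proof.
move=> h.
rewrite (@ht_comb k (fun s => x * (cf i s)%:~R + y * (cf j s)%:~R)).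
  by rewrite big_split /= /ht !mulr_sumr.
rewrite h (cfE i) (cfE j) !scaler_sumr -big_split /=; apply: eq_bigr => s _.
by rewrite scalerDl !scalerA.
Qed.

Lemma ht_lin1 k i x : Phi k = x *: Phi i -> ht k = x * ht i.
Proof. by move=> h; rewrite (@ht_lin2 k i i x 0) ?mul0r ?addr0 // scale0r addr0. Qed.

Lemma sum_delta (F : 'I_m -> R) s : s \in Delta ->
  \sum_(t in Delta) (t == s)%:R * F t = F s.
Proof.
move=> hs; rewrite (bigD1 s) //= eqxx mul1r big1 ?addr0 // => t /andP[_ /negbTE ->].
by rewrite mul0r.
Qed.

Lemma ht_simple s : s \in Delta -> ht s = 1.
Proof.
move=> hs; rewrite (@ht_comb s (fun t => (t == s)%:R)).
  by rewrite (bigD1 s) //= eqxx big1 ?addr0 // => t /andP[_ /negbTE ->].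
rewrite (bigD1 s) //= eqxx scale1r big1 ?addr0 // => t /andP[_ /negbTE ->].
by rewrite scale0r.
Qed.

Lemma ht_neq0 j : ht j != 0.
Proof.
apply/negP => /eqP h0; have := Phi_neq0 j; rewrite cfE.
case: (cf_sign j) => hs.
  move: h0 => /eqP; rewrite /ht psumr_eq0 => [/allP H|s _]; last by rewrite ler0z.
  rewrite big1 ?eqxx // => s sD; have /implyP := H s (mem_index_enum s).
  by move=> /(_ sD)/eqP ->; rewrite scale0r.
have h0' : \sum_(s in Delta) (- cf j s)%:~R = 0 :> R.
  rewrite (eq_bigr (fun s => - (cf j s)%:~R)); last by move=> s _; rewrite intrN.
  by rewrite sumrN -/(ht j) h0 oppr0.
move: h0' => /eqP; rewrite psumr_eq0 => [/allP H|s _]; last by rewrite ler0z oppr_ge0.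
rewrite big1 ?eqxx // => s sD; have /implyP := H s (mem_index_enum s).
by move=> /(_ sD)/eqP; rewrite intrN => /eqP; rewrite oppr_eq0 => /eqP ->; rewrite scale0r.
Qed.

Lemma ht_pos j : positive_root Phi Delta j <-> 0 < ht j.
Proof.
split.
  move=> [c [cp hc]]; rewrite lt_def ht_neq0 (ht_comb hc) /=.
  by apply: sumr_ge0 => s _; rewrite ler0z.
move=> hp; case: (cf_sign j) => hs; first by exists (cf j); split => //; exact: cfE.
have : ht j <= 0 by apply: sumr_le0 => s _; rewrite lerz0.
by rewrite leNgt hp.
Qed.

Lemma ht_negE k : in_neg_positive Phi Delta k <-> ht k < 0.
Proof.
split.
  move=> [k' [hk' e]]; rewrite (@ht_lin1 k k' (-1)); last by rewrite e scaleN1r.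
  by rewrite mulN1r oppr_lt0; apply/ht_pos.
move=> hn; have [k' hk'] := Phi_opp k; exists k'; split; last by rewrite hk' opprK.
by apply/ht_pos; rewrite (@ht_lin1 k' k (-1)) ?scaleN1r // mulN1r oppr_gt0.
Qed.


Lemma le_cover_left j j' k : root_cover Phi Delta j j' -> root_le Phi Delta j' k ->
  root_le Phi Delta j k.
Proof.
move=> hc h; move: hc; elim: h => [l|a b c hab IH hbc] hc.
  exact: root_le_step (root_le_refl _ _ j) hc.
exact: root_le_step (IH hc) hbc.
Qed.

Lemma intr_sumD (c : 'I_m -> int) :
  (\sum_(s in Delta) c s)%:~R = \sum_(s in Delta) (c s)%:~R :> R.
Proof. by rewrite rmorph_sum. Qed.

Lemma diff_le N : forall j k (c : 'I_m -> int), (forall s, (0 <= c s)%R) ->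
  \sum_(s in Delta) c s = N%:Z -> positive_root Phi Delta j -> positive_root Phi Delta k ->
  Phi k - Phi j = \sum_(s in Delta) (c s)%:~R *: Phi s -> root_le Phi Delta j k.
Proof.
elim: N => [|N IH] j k c cp cs pj pk hd.
  have c0 : forall s, s \in Delta -> c s = 0.
    move: cs => /eqP; rewrite psumr_eq0 // => /allP H s sD.
    by have /implyP := H s (mem_index_enum s) => /(_ sD)/eqP.
  have : Phi k - Phi j = 0 by rewrite hd big1 // => s sD; rewrite c0 // scale0r.
  move/eqP; rewrite subr_eq0 => /eqP/Phi_inj ->; exact: root_le_refl.
have hsc : \sum_(s in Delta) (c s)%:~R = N.+1%:R :> R by rewrite -intr_sumD cs.
have htk : ht k = ht j + N.+1%:R.
  rewrite (@ht_comb k (fun s => (cf j s)%:~R + (c s)%:~R)); last first.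
    have -> : Phi k = Phi j + (Phi k - Phi j) by rewrite addrC subrK.
    rewrite hd {1}(cfE j) -big_split /=; apply: eq_bigr => s _; by rewrite scalerDl.
  by rewrite big_split /= hsc.
have pj0 : 0 < ht j by apply/ht_pos.
set D := Phi k - Phi j.
have Dn0 : D != 0.
  apply/negP => /eqP; rewrite /D => /eqP; rewrite subr_eq0 => /eqP/Phi_inj e.
  move: htk; rewrite e => h; have : (0:R) < N.+1%:R by rewrite ltr0n.
  lra.
have hDD : dotp D D = \sum_(s in Delta) (c s)%:~R * dotp (Phi s) D.
  by rewrite {1}/D hd dotp_suml; apply: eq_bigr => s _; rewrite dotpZl.
have [s [sD cs0 dp]] : exists s, [/\ s \in Delta, (0 < c s)%R & 0 < dotp (Phi s) D].
  apply/not_existsP => H.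
  have : dotp D D <= 0.
    rewrite hDD; apply: sumr_le0 => s sD; rewrite leNgt; apply/negP => hlt.
    have [e|ne] := eqVneq (c s) 0; first by move: hlt; rewrite e mul0r ltxx.
    have cs0 : (0 < c s)%R by rewrite lt_neqAle eq_sym ne cp.
    apply: (H s); split => //.
    by move: hlt; rewrite pmulr_rgt0 // ltr0z.
  by rewrite leNgt dotpp_gt0.
pose c' t := c t - (if t == s then 1 else 0).
have c'p : forall t, (0 <= c' t)%R.
  move=> t; rewrite /c'; case: eqP => [->|_]; last by rewrite subr0.
  by rewrite subr_ge0.
have c's : \sum_(t in Delta) c' t = N%:Z.
  rewrite /c' sumrB cs (bigD1 s) //= eqxx big1 ?addr0 => [|t /andP[_ /negbTE ->]] //.
  by rewrite -addn1 PoszD addrK.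
have c'd : \sum_(t in Delta) (c' t)%:~R *: Phi t = D - Phi s.
  rewrite (eq_bigr (fun t => (c t)%:~R *: Phi t - (if t == s then Phi t else 0))); last first.
    by move=> t _; rewrite /c' intrB scalerBl; case: ifP => _; rewrite ?scale1r ?scale0r.
  rewrite sumrB -hd (bigD1 s) //= eqxx big1 ?addr0 // => t /andP[_ /negbTE ->] //.
have [hk|hj] : 0 < dotp (Phi k) (Phi s) \/ dotp (Phi j) (Phi s) < 0.
  move: dp; rewrite /D dotpBr ![dotp (Phi s) _]dotpC => dp.
  by case: (ltrP 0 (dotp (Phi k) (Phi s))) => h; [left | right; lra].
- have nks : Phi k != Phi s.
    apply/negP => /eqP/Phi_inj e; move: htk; rewrite e (ht_simple sD) -natr1 => h1.
    have : (0:R) <= N%:R by rewrite ler0n.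
    lra.
  have [k' hk'] := string hk nks.
  have htk' : ht k' = ht k - 1.
    have e : Phi k' = 1 *: Phi k + (-1) *: Phi s by rewrite scale1r scaleN1r.
    by rewrite (ht_lin2 e) (ht_simple sD) mul1r mulN1r.
  have pk' : positive_root Phi Delta k'.
    apply/ht_pos; rewrite htk' htk -natr1.
    have : (0:R) <= N%:R by rewrite ler0n.
    lra.
  apply: root_le_step (IH j k' c' c'p c's pj pk' _) _.
    by rewrite c'd /D hk' addrAC.
  split => //; split => //; exists s; split => //.
  by rewrite hk' opprB addrC subrK.
- have [s' hs'] := Phi_opp s.
  have hjs : 0 < dotp (Phi j) (Phi s') by rewrite hs' dotpNr oppr_gt0.
  have ht's : ht s' = -1 by rewrite (@ht_lin1 s' s (-1)) ?scaleN1r // (ht_simple sD) mulr1.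
  have njs : Phi j != Phi s'.
    apply/negP => /eqP/Phi_inj e; move: pj0; rewrite e ht's.
    by rewrite oppr_gt0 ltr10.
  have [j' hj'] := string hjs njs.
  have htj' : ht j' = ht j + 1.
    have e : Phi j' = 1 *: Phi j + 1 *: Phi s by rewrite hj' hs' opprK !scale1r.
    by rewrite (ht_lin2 e) (ht_simple sD) !mul1r.
  have pj' : positive_root Phi Delta j'.
    by apply/ht_pos; rewrite htj'; apply: addr_gt0.
  apply: (@le_cover_left j j' k).
    split => //; split => //; exists s; split => //.
    by rewrite hj' hs' opprK addrC addKr.
  apply: (IH j' k c' c'p c's pj' pk).
  by rewrite c'd /D hj' hs' opprK opprD addrA.
Qed.

Lemma pos_le i j l : positive_root Phi Delta i -> positive_root Phi Delta j ->
  Phi l = Phi j - Phi i -> 0 < ht l -> root_le Phi Delta i j.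
Proof.
move=> pi pj hl hp.
have cp : forall s, (0 <= cf l s)%R.
  case: (cf_sign l) => // hs; exfalso.
  have : ht l <= 0 by apply: sumr_le0 => s _; rewrite lerz0.
  by rewrite leNgt hp.
have sp : (0 <= \sum_(s in Delta) cf l s)%R by apply: sumr_ge0.
have e : \sum_(s in Delta) cf l s = (absz (\sum_(s in Delta) cf l s))%:Z by rewrite gez0_abs.
exact: (diff_le cp e pi pj (etrans (esym hl) (cfE l))).

Qed.

Lemma anti_dot Psi : antichain Phi Delta Psi -> forall j k, j \in Psi -> k \in Psi ->
  j != k -> dotp (Phi j) (Phi k) <= 0.
Proof.
move=> [hp ha] j k jP kP jk; rewrite leNgt; apply/negP => hd.
have njk : Phi j != Phi k by apply: contra jk => /eqP/Phi_inj ->.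
have [l hl] := string hd njk.
have pj := hp j jP; have pk := hp k kP.
case: (ltgtP (ht l) 0) => [hn|hpos|/eqP]; last by rewrite (negbTE (ht_neq0 l)).
  have [l' hl'] := Phi_opp l.
  apply: (ha j k jP kP jk); apply: (pos_le pj pk (l := l')).
    by rewrite hl' hl opprB.
  by rewrite (@ht_lin1 l' l (-1)) ?scaleN1r // mulN1r oppr_gt0.
apply: (ha k j kP jP); first by rewrite eq_sym.
exact: (pos_le pk pj hl hpos).
Qed.


Lemma refl_invol (a b : 'rV[R]_d) : a != 0 -> refl a (refl a b) = b.
Proof.
move=> a0.
set t := 2 * dotp b a / dotp a a.
have -> : refl a b = 1 *: b + (- t) *: a by rewrite scale1r scaleNr.
by rewrite refl_lin refl_self // scale1r scaleNr scalerN opprK /refl -/t subrK.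
Qed.

Definition sfun (i j : 'I_m) : 'I_m := odflt j [pick k | Phi k == refl (Phi i) (Phi j)].

Lemma sfunE i j : Phi (sfun i j) = refl (Phi i) (Phi j).
Proof.
rewrite /sfun; case: pickP => [k /eqP //|H].
by have [k hk] := Phi_refl i j; move: (H k); rewrite hk eqxx.
Qed.

Lemma sfun_inj i : injective (sfun i).
Proof.
move=> j1 j2 e; apply: Phi_inj.
rewrite -(refl_invol (Phi j1) (Phi_neq0 i)) -(refl_invol (Phi j2) (Phi_neq0 i)).
by rewrite -!sfunE e.
Qed.

Definition sref i : {perm 'I_m} := perm (@sfun_inj i).

Lemma srefE i j : Phi (sref i j) = refl (Phi i) (Phi j).
Proof. by rewrite permE sfunE. Qed.

Lemma sref_in i : sref i \in weyl Phi.
Proof.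
rewrite /weyl; apply: mem_gen; rewrite inE; apply/asboolP; exists i => j.
exact: srefE.
Qed.

Definition linp (w : {perm 'I_m}) := forall k i j (x y : R),
  Phi k = x *: Phi i + y *: Phi j -> Phi (w k) = x *: Phi (w i) + y *: Phi (w j).

Lemma weyl_lin w : w \in weyl Phi -> linp w.
Proof.
move/gen_prodgP => [n [c hc ->]] {w}.
elim: n c hc => [|n IH] c hc.
  by rewrite big_ord0 => k i j x y; rewrite !perm1.
rewrite big_ord_recr /= => k i j x y e.
have := hc ord_max; rewrite inE => /asboolP [i0 h0].
rewrite !permM !h0 (IH (fun i => c (widen_ord (leqnSn n) i)) (fun i => hc _) k i j x y e).
by rewrite refl_lin.
Qed.

Lemma ht_w w k i j (x y : R) : w \in weyl Phi -> Phi k = x *: Phi i + y *: Phi j ->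
  ht (w k) = x * ht (w i) + y * ht (w j).
Proof. by move=> wW e; apply: ht_lin2; apply: weyl_lin. Qed.

Lemma negE (u : {perm 'I_m}) j :
  `[< in_neg_positive Phi Delta (u j) >] = (ht (u j) < 0).
Proof. by apply/asboolP/idP => /ht_negE. Qed.

Definition wperm (b g : 'I_m) (l : seq bool) : {perm 'I_m} :=
  foldr (fun t p => (sref (if t then b else g) * p)%g) 1%g l.

Lemma wperm_in b g l : wperm b g l \in weyl Phi.
Proof. by elim: l => [|t l IH] /=; rewrite ?group1 // groupM // sref_in. Qed.

Lemma wperm_spec b g (z1 z2 : int) :
  2 * dotp (Phi b) (Phi g) / dotp (Phi g) (Phi g) = z1%:~R ->
  2 * dotp (Phi g) (Phi b) / dotp (Phi b) (Phi b) = z2%:~R ->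
  forall l j (x y : int), Phi j = x%:~R *: Phi b + y%:~R *: Phi g ->
  Phi (wperm b g l j) = (wact z1 z2 l (x, y)).1%:~R *: Phi b + (wact z1 z2 l (x, y)).2%:~R *: Phi g.
Proof.
move=> h1 h2; elim=> [|t l IH] j x y e /=; first by rewrite perm1.
rewrite permM; case: t => /=; apply: IH; rewrite srefE e refl_lin.
  rewrite refl_self ?Phi_neq0 // /refl h2.
  apply/rowP => i; rewrite !mxE !(rmorphB, rmorphN, rmorphM) /=; ring.
rewrite [refl (Phi g) (Phi g)]refl_self ?Phi_neq0 // /refl h1.
apply/rowP => i; rewrite !mxE !(rmorphB, rmorphN, rmorphM) /=; ring.
Qed.

Definition ng (j : 'I_m) (w : {perm 'I_m}) : bool := ht (w j) < 0.

Lemma pair_count b g (z1 z2 : int) h :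
  2 * dotp (Phi b) (Phi g) / dotp (Phi g) (Phi g) = z1%:~R ->
  2 * dotp (Phi g) (Phi b) / dotp (Phi b) (Phi b) = z2%:~R ->
  (forall a c : R, nzall a c (pairsof z1 z2 h) -> count (bothneg a c) (pairsof z1 z2 h) = 1%N) ->
  (#|[set w in weyl Phi | ng b w && ng g w]| * size (words h) = #|weyl Phi|)%N.
Proof.
move=> h1 h2 hnum.
rewrite -(size_map (wperm b g)).
apply: (count_lemma (A := fun w => ng b w && ng g w)).
  by apply/allP => v /mapP [l _ ->]; exact: wperm_in.
move=> w wW; rewrite count_map.
have hb : Phi b = (1%:Z)%:~R *: Phi b + (0%:Z)%:~R *: Phi g by rewrite scale1r scale0r addr0.
have hg : Phi g = (0%:Z)%:~R *: Phi b + (1%:Z)%:~R *: Phi g by rewrite scale1r scale0r add0r.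
have key : forall l (x y : int), Phi (wperm b g l b) = x%:~R *: Phi b + y%:~R *: Phi g ->
   ht (w (wperm b g l b)) = x%:~R * ht (w b) + y%:~R * ht (w g).
  by move=> l x y e; apply: ht_w.
have hF : forall l j (x y : int), Phi j = x%:~R *: Phi b + y%:~R *: Phi g ->
   ht (w (wperm b g l j)) = lf (ht (w b)) (ht (w g)) (wact z1 z2 l (x, y)).
  by move=> l j x y e; rewrite /lf; apply: ht_w => //; apply: wperm_spec.
rewrite -(hnum (ht (w b)) (ht (w g))).
  rewrite /pairsof count_map; apply: eq_count => l /=.
  by rewrite /ng /bothneg /= !permM (hF l b 1 0 hb) (hF l g 0 1 hg).
rewrite /nzall /pairsof all_map; apply/allP => l _ /=.
by rewrite -(hF l b 1 0 hb) -(hF l g 0 1 hg) !ht_neq0.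
Qed.

Definition Kw : R := (#|weyl Phi|)%:R.
Lemma Kw_gt0 : 0 < Kw.
Proof. by rewrite /Kw ltr0n; apply/card_gt0P; exists 1%g; exact: group1. Qed.

Definition P (j k : 'I_m) : R := (\sum_(w in weyl Phi) (ng j w && ng k w)%:R) / Kw.

Lemma sum_card (B : pred {perm 'I_m}) :
  \sum_(w in weyl Phi) (B w)%:R = (#|[set w in weyl Phi | B w]|)%:R :> R.
Proof.
rewrite -sum1_card natr_sum big_mkcond [RHS]big_mkcond /=; apply: eq_bigr => w _.
by rewrite inE; case: (w \in weyl Phi); case: (B w).
Qed.

Lemma P_card j k N : (#|[set w in weyl Phi | ng j w && ng k w]| * N = #|weyl Phi|)%N ->
  P j k = 1 / N%:R.
Proof.
move=> e; have K0 := Kw_gt0.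
have N0 : N%:R != 0 :> R.
  apply/negP => /eqP; move/eqP: K0; rewrite /Kw -e natrM => /eqP K0 N0.
  by move: K0; rewrite N0 mulr0 ltxx.
rewrite /P sum_card /Kw -e natrM; field.
by apply/andP; split => //; apply/negP => /eqP z; move: K0; rewrite /Kw -e natrM z mul0r ltxx.
Qed.

Lemma P_self j : P j j = 1 / 2.
Proof.
apply: P_card.
have -> : 2%N = size [:: 1%g; sref j] by [].
apply: (count_lemma (A := fun w => ng j w && ng j w)).
  by rewrite /= group1 sref_in.
move=> w wW /=; rewrite !andbb mul1g /ng permM.
have e : Phi (sref j j) = (-1) *: Phi j + 0 *: Phi j.
  by rewrite srefE refl_self ?Phi_neq0 // scale0r addr0 scaleN1r.
rewrite (ht_w wW e) mul0r addr0 mulN1r oppr_lt0.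
by case: (ltgtP (ht (w j)) 0) => // /eqP; rewrite (negbTE (ht_neq0 _)).
Qed.

Definition rr (j : 'I_m) : R := Num.sqrt (dotp (Phi j) (Phi j)).
Definition cosr (j k : 'I_m) : R := dotp (Phi j) (Phi k) / (rr j * rr k).

Lemma rr_gt0 j : 0 < rr j.
Proof. by rewrite /rr sqrtr_gt0 dot_pos. Qed.
Lemma rr_sq j : rr j ^+ 2 = dotp (Phi j) (Phi j).
Proof. by rewrite /rr sqr_sqrtr // ltW // dot_pos. Qed.

Lemma cosr_self j : cosr j j = 1.
Proof.
rewrite /cosr -expr2 rr_sq divff //; exact: lt0r_neq0 (dot_pos j).
Qed.

Ltac sizew := match goal with |- context [size (words ?h)] =>
  let v := eval vm_compute in (size (words h)) in change (size (words h)) with v end.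

Lemma P_pair Psi : antichain Phi Delta Psi -> forall j k, j \in Psi -> k \in Psi -> j != k ->
  P j k <= 1 / 4 /\ cosr j k / 5 <= P j k - 1 / 4.
Proof.
move=> hPsi j k jP kP jk.
have dp0 := anti_dot hPsi jP kP jk.
have /intrP [z1 h1] := Phi_int k j.
have /intrP [z2 h2] := Phi_int j k.
have g1 := h1; have g2 := h2.
have pj := hPsi.1 j jP; have pk := hPsi.1 k kP.
have kj : Phi k != Phi j by apply: contra jk => /eqP/Phi_inj ->.
have kj' : Phi k != - Phi j.
  apply/negP => /eqP e; have := @ht_lin1 k j (-1); rewrite scaleN1r => /(_ e).
  move: pj pk => /ht_pos pj /ht_pos pk e2; move: pk; rewrite e2; lra.
have hcs := CS_strict kj kj'.
have aa0 := dot_pos j; have bb0 := dot_pos k.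
move: h1 h2 hcs dp0 aa0 bb0; rewrite [dotp (Phi k) (Phi j)]dotpC.
set dp := dotp (Phi j) (Phi k); set aa := dotp (Phi j) (Phi j); set bb := dotp (Phi k) (Phi k).
move=> h1 h2 hcs dp0 aa0 bb0.
have hz : (z1 = 0 /\ z2 = 0 \/ z1 < 0 /\ z2 < 0)%R.
  have [e|ne] := eqVneq dp 0.
    by left; split; apply/eqP; rewrite -(eqr_int R) ?(esym h1) ?(esym h2) e !mulr0 mul0r.
  have dn : dp < 0 by rewrite lt_neqAle ne.
  right; split; rewrite -(ltr_int R) ?(esym h1) ?(esym h2) pmulr_llt0 ?invr_gt0 //
     pmulr_rlt0 //.
have z12 : (z1 * z2 < 4)%R.
  rewrite -(ltr_int R) intrM -h1 -h2.
  have -> : 2 * dp / bb * (2 * dp / aa) = 4 * (dp ^+ 2 / (aa * bb)).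
    by field; rewrite ?lt0r_neq0.
  rewrite -[X in _ < X]mulr1 ltr_pM2l // ltr_pdivrMr ?mul1r //; exact: mulr_gt0.
have hc : cosr j k <= 0.
  by rewrite /cosr pmulr_lle0 // invr_gt0 mulr_gt0 // rr_gt0.
have hc2 : cosr j k ^+ 2 = (z1 * z2)%:~R / 4.
  rewrite intrM -h1 -h2 /cosr expr_div_n exprMn !rr_sq -/aa -/bb -/dp.
  by field; rewrite ?lt0r_neq0.
have [[e1 e2]|[[e1 e2]|[[e1 e2]|[[e1 e2]|[[e1 e2]|[e1 e2]]]]]] :
  (z1 = 0 /\ z2 = 0 \/ z1 = -1 /\ z2 = -1 \/ z1 = -1 /\ z2 = -2 \/ z1 = -2 /\ z2 = -1 \/
   z1 = -1 /\ z2 = -3 \/ z1 = -3 /\ z2 = -1)%R by lia.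
- rewrite e1 e2 in g1 g2 hc2.
  rewrite (P_card (pair_count g1 g2 (@case00 R))); sizew.
  move: hc2 hc; rewrite ?(intrM, rmorphN, rmorph1, rmorph0, rmorph_nat) => hc2 hc.
  split; nra.
- rewrite e1 e2 in g1 g2 hc2.
  rewrite (P_card (pair_count g1 g2 (@case11 R))); sizew.
  move: hc2 hc; rewrite ?(intrM, rmorphN, rmorph1, rmorph0, rmorph_nat) => hc2 hc.
  split; nra.
- rewrite e1 e2 in g1 g2 hc2.
  rewrite (P_card (pair_count g1 g2 (@case12 R))); sizew.
  move: hc2 hc; rewrite ?(intrM, rmorphN, rmorph1, rmorph0, rmorph_nat) => hc2 hc.
  split; nra.
- rewrite e1 e2 in g1 g2 hc2.
  rewrite (P_card (pair_count g1 g2 (@case21 R))); sizew.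
  move: hc2 hc; rewrite ?(intrM, rmorphN, rmorph1, rmorph0, rmorph_nat) => hc2 hc.
  split; nra.
- rewrite e1 e2 in g1 g2 hc2.
  rewrite (P_card (pair_count g1 g2 (@case13 R))); sizew.
  move: hc2 hc; rewrite ?(intrM, rmorphN, rmorph1, rmorph0, rmorph_nat) => hc2 hc.
  split; nra.
- rewrite e1 e2 in g1 g2 hc2.
  rewrite (P_card (pair_count g1 g2 (@case31 R))); sizew.
  move: hc2 hc; rewrite ?(intrM, rmorphN, rmorph1, rmorph0, rmorph_nat) => hc2 hc.
  split; nra.
Qed.

Lemma sum_cos (Psi : {set 'I_m}) : 0 <= \sum_(j in Psi) \sum_(k in Psi) cosr j k.
Proof.
set u := \sum_(j in Psi) (rr j)^-1 *: Phi j.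
have -> : \sum_(j in Psi) \sum_(k in Psi) cosr j k = dotp u u.
  rewrite /u dotp_suml; apply: eq_bigr => j _.
  rewrite dotp_sumr; apply: eq_bigr => k _.
  rewrite dotpZl dotpZr /cosr invfM; ring.
exact: dotpp_ge0.
Qed.

Lemma var_bounds Psi : antichain Phi Delta Psi ->
  1 / 20 * (#|Psi|)%:R <= var_X Phi Delta Psi <= 1 / 4 * (#|Psi|)%:R.
Proof.
move=> hPsi.
have hX : forall w, X_Psi Phi Delta Psi w = \sum_(j in Psi) (ng j w)%:R.
  move=> w; rewrite /X_Psi -sum1_card natr_sum big_mkcond [RHS]big_mkcond /=.
  apply: eq_bigr => j _; rewrite inE negE /ng.
  by case: (j \in Psi); case: (ht (w j) < 0).
have hE1 : expect Phi (X_Psi Phi Delta Psi) = \sum_(j in Psi) P j j.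
  rewrite /expect (eq_bigr _ (fun w _ => hX w)) exchange_big /= mulr_suml.
  by apply: eq_bigr => j _; rewrite /P; congr (_ / _); apply: eq_bigr => w _; rewrite andbb.
have hE2 : expect Phi (fun w => X_Psi Phi Delta Psi w ^+ 2) =
           \sum_(j in Psi) \sum_(k in Psi) P j k.
  rewrite /expect.
  rewrite (eq_bigr (fun w => \sum_(j in Psi) \sum_(k in Psi) (ng j w && ng k w)%:R)); last first.
    move=> w _; rewrite hX expr2 mulr_suml; apply: eq_bigr => j _.
    rewrite mulr_sumr; apply: eq_bigr => k _.
    by case: (ng j w); case: (ng k w); rewrite ?mul1r ?mul0r.
  rewrite exchange_big /= mulr_suml; apply: eq_bigr => j _.
  rewrite exchange_big /= mulr_suml; apply: eq_bigr => k _.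
  by rewrite /P.
rewrite /var_X hE2 hE1 [X in _ - X ^+ 2](eq_bigr (fun _ => 1 / 2)); last by move=> j _; rewrite P_self.
have -> : (\sum_(j in Psi) (1 / 2 : R)) ^+ 2 = \sum_(j in Psi) \sum_(k in Psi) (1 / 4 : R).
  rewrite expr2 mulr_suml; apply: eq_bigr => j _.
  rewrite mulr_sumr; apply: eq_bigr => k _; lra.
rewrite -sumrB (eq_bigr (fun j => \sum_(k in Psi) (P j k - 1 / 4))); last first.
  by move=> j _; rewrite sumrB.
apply/andP; split.
  apply: (@le_trans _ _ (\sum_(j in Psi) \sum_(k in Psi) (cosr j k / 5 + (j == k)%:R / 20))).
    rewrite (eq_bigr (fun j => \sum_(k in Psi) (cosr j k / 5) + 1 / 20)); last first.
      move=> j jP; rewrite big_split /=; congr (_ + _).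
      rewrite (bigD1 j) //= eqxx big1 ?addr0 // => k /andP[_ ne].
      by rewrite eq_sym (negbTE ne) mul0r.
    rewrite big_split /= sumr_const.
    have -> : (1 / 20 : R) *+ #|Psi| = 1 / 20 * (#|Psi|)%:R by rewrite mulr_natr.
    have hs : 0 <= \sum_(j in Psi) \sum_(k in Psi) cosr j k / 5.
      rewrite (eq_bigr (fun j => (\sum_(k in Psi) cosr j k) / 5)); last first.
        by move=> j _; rewrite mulr_suml.
      rewrite -mulr_suml; apply: mulr_ge0; [exact: sum_cos | lra].
    lra.
  apply: ler_sum => j jP; apply: ler_sum => k kP.
  have [<-|ne] := eqVneq j k.
    by rewrite ?eqxx P_self cosr_self ?mulr1n; lra.
  rewrite ?(negbTE ne) mul0r addr0.
  by case: (P_pair hPsi jP kP ne).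
apply: (@le_trans _ _ (\sum_(j in Psi) (1 / 4 : R))).
  apply: ler_sum => j jP; rewrite (bigD1 j) //= P_self.
  have : \sum_(k in Psi | k != j) (P j k - 1 / 4) <= 0.
    apply: sumr_le0 => k /andP[kP ne].
    have ne' : j != k by rewrite eq_sym.
    have [h _] := P_pair hPsi jP kP ne'.
    lra.
  lra.
by rewrite sumr_const mulrC mulr_natr.
Qed.

End Roots.

Theorem proposition4p4 (R : realType) (d m : nat -> nat)
  (Phi : forall n, 'I_(m n) -> 'rV[R]_(d n))
  (Delta Psi : forall n, {set 'I_(m n)})
  (hPhi : forall n, is_root_system (Phi n))
  (hDelta : forall n, is_simple_system (Phi n) (Delta n))
  (hPsi : forall n, antichain (Phi n) (Delta n) (Psi n)) :
  exists (c C : R) (N : nat), 0 < c /\ 0 < C /\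
    forall n, (N <= n)%N ->
      c * (#|Psi n|)%:R <= var_X (Phi n) (Delta n) (Psi n) <= C * (#|Psi n|)%:R.
Proof.
exists (1 / 20), (1 / 4), 0%N; split; first lra.
split; first lra.
move=> n _; exact: (var_bounds (hPhi n) (hDelta n) (hPsi n)).
Qed.
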